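(* Let $p$ be a prime with $\gcd(p,6)=1$ and $m\ge 1$. The number $C_R(\mathbb{Z}_{p^m})$ of isomorphism classes of nonsingular reduced Weierstrass elliptic curves over $\mathbb{Z}_{p^m}$ is $$C_R(\mathbb{Z}_{p^m})=\begin{cases}2p^m+6 & p\equiv 1 \pmod{12},\\ 2p^m+2 & p\equiv 5\pmod{12},\\ 2p^m+4 & p\equiv 7\pmod{12},\\ 2p^m & p\equiv 11\pmod{12}.\end{cases}$$
   Context: A reduced Weierstrass curve over $\mathbb{Z}_{n}$ is $y^2=x^3+ax+b$ with $(a,b)\in\mathbb{Z}_{n}^2$; it is nonsingular iff $\Delta=-16(4a^3+27b^2)$ is a unit in $\mathbb{Z}_{n}$. Two such curves with coefficients $(a,b)$ and $(\bar a,\bar b)$ are isomorphic iff there is $u\in\mathbb{Z}_{n}^*$ with $\bar a=u^{-4}a$ and $\bar b=u^{-6}b$ (i.e. related by the change of variables $(x,y)\mapsto(u^2x,u^3y)$). $C_R(\mathbb{Z}_n)$ denotes the number of isomorphism classes of nonsingular reduced curves over $\mathbb{Z}_n$. *)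

(* Defs.v *)
From HB Require Import structures.
From mathcomp Require Import all_boot all_order all_algebra.
Set Implicit Arguments. Unset Strict Implicit. Unset Printing Implicit Defensive.
Import GRing.Theory.
Local Open Scope ring_scope.

(* A reduced Weierstrass curve y^2 = x^3 + a x + b over 'Z_n is the pair (a,b). *)
Definition disc (n : nat) (c : 'Z_n * 'Z_n) : 'Z_n :=
  - 16%:R * (4%:R * c.1 ^+ 3 + 27%:R * c.2 ^+ 2).

Definition nonsingular (n : nat) (c : 'Z_n * 'Z_n) : bool :=
  disc c \is a GRing.unit.

Definition curve_iso (n : nat) (c c' : 'Z_n * 'Z_n) : bool :=
  [exists u : 'Z_n, (u \is a GRing.unit) &&
     ((c'.1 == u^-1 ^+ 4 * c.1) && (c'.2 == u^-1 ^+ 6 * c.2))].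

Definition nonsing_curves (n : nat) : {set 'Z_n * 'Z_n} :=
  [set c | nonsingular c].

Definition C_R (n : nat) : nat :=
  #|[set [set c' in nonsing_curves n | curve_iso c c'] | c in nonsing_curves n]|.

(* Main.v *)
Require Import Defs.
From mathcomp Require Import all_boot all_order all_algebra all_fingroup all_solvable.
From mathcomp Require Import ring zify.
Set Implicit Arguments. Unset Strict Implicit. Unset Printing Implicit Defensive.
Import GRing.Theory FinRing.Theory.

Section S.
Variables (p m : nat).
Hypotheses (pp : prime p) (p6 : coprime p 6) (m1 : (1 <= m)%N).
Local Notation n := (p ^ m)%N.
Local Notation R := 'Z_(p ^ m).
Local Open Scope ring_scope.

Lemma n_gt1 : (1 < n)%N.
Proof. by rewrite -(expn0 p) ltn_exp2l ?prime_gt1. Qed.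

Definition nu (x : R) := (p %| x)%N.

Lemma unitE (x : R) : (x \is a GRing.unit) = ~~ nu x.
Proof.
by rewrite -{1}[x]natr_Zp unitZpE ?n_gt1 // coprime_pexpl // prime_coprime.
Qed.

Lemma nuN (k : nat) : nu (k%:R) = (p %| k)%N.
Proof.
rewrite /nu val_Zp_nat ?n_gt1 //.
by rewrite /dvdn (modn_dvdm k (dvdn_exp m1 (dvdnn p))).
Qed.

Lemma nuD x y : nu x -> nu y -> nu (x + y).
Proof. by rewrite -[x]natr_Zp -[y]natr_Zp -natrD !nuN; apply: dvdn_add. Qed.

Lemma nuMl x y : nu x -> nu (x * y).
Proof. by rewrite -[x]natr_Zp -[y]natr_Zp -natrM !nuN => h; apply: dvdn_mulr. Qed.

Lemma nuMr x y : nu y -> nu (x * y).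
Proof. by rewrite mulrC; apply: nuMl. Qed.

Lemma nuNeg x : nu x -> nu (- x).
Proof. by rewrite -mulrN1; apply: nuMl. Qed.

Lemma nuB x y : nu x -> nu y -> nu (x - y).
Proof. by move=> hx hy; apply: nuD => //; apply: nuNeg. Qed.

Lemma nu0 : nu 0.
Proof. by rewrite -(natr_Zp 0) nuN dvdn0. Qed.

Lemma unitD_nu x y : x \is a GRing.unit -> nu y -> (x + y) \is a GRing.unit.
Proof.
rewrite !unitE => hx hy; apply/negP => hs; move/negP: hx; apply.
by rewrite -(addrK y x); apply: nuB.
Qed.

Lemma p_nd2 : ~~ (p %| 2)%N.
Proof.
apply/negP => h; move: p6; rewrite /coprime.
by have /eqP -> : p == 2%N by rewrite -dvdn_prime2.
Qed.

Lemma p_nd3 : ~~ (p %| 3)%N.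
Proof.
apply/negP => h; move: p6; rewrite /coprime.
by have /eqP -> : p == 3%N by rewrite -dvdn_prime2.
Qed.

Lemma unit_nat k : ~~ (p %| k)%N -> (k%:R : R) \is a GRing.unit.
Proof. by rewrite unitE nuN. Qed.

Lemma unit2 : (2%:R : R) \is a GRing.unit. Proof. exact: unit_nat p_nd2. Qed.
Lemma unit3 : (3%:R : R) \is a GRing.unit. Proof. exact: unit_nat p_nd3. Qed.


Lemma mul0_split (x y : R) : x * y = 0 -> (x - y) \is a GRing.unit -> x = 0 \/ y = 0.
Proof.
move=> h u.
case ux: (x \is a GRing.unit).
  by right; rewrite -(mulKr ux y) h mulr0.
case uy: (y \is a GRing.unit).
  by left; rewrite -(mulrK uy x) h mul0r.
move: u; rewrite unitE; move: ux uy; rewrite !unitE => /negbFE hx /negbFE hy.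
by rewrite nuB.
Qed.

Lemma sq_eq (x y : R) : x ^+ 2 = y ^+ 2 -> y \is a GRing.unit -> x = y \/ x = - y.
Proof.
move=> h uy.
have e : (x - y) * (x + y) = 0.
  have -> : (x - y) * (x + y) = x ^+ 2 - y ^+ 2 by ring.
  by rewrite h subrr.
have e2 : (x - y) - (x + y) = - (2%:R * y) by ring.
case: (mul0_split e); first by rewrite e2 unitrN unitrM unit2.
  by move/eqP; rewrite subr_eq0 => /eqP; left.
by move/eqP; rewrite addr_eq0 => /eqP; right.
Qed.

Lemma root4 (u : R) : u ^+ 4 = 1 -> u ^+ 2 = 1 \/ u ^+ 2 = - 1.
Proof.
move=> h.
have e : (u ^+ 2 - 1) * (u ^+ 2 + 1) = 0.
  have -> : (u ^+ 2 - 1) * (u ^+ 2 + 1) = u ^+ 4 - 1 by ring.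
  by rewrite h subrr.
have e2 : (u ^+ 2 - 1) - (u ^+ 2 + 1) = - 2%:R by ring.
case: (mul0_split e); first by rewrite e2 unitrN unit2.
  by move/eqP; rewrite subr_eq0 => /eqP; left.
by move/eqP; rewrite addr_eq0 => /eqP; right.
Qed.

Lemma cube1 (w : R) : w ^+ 3 = 1 -> w = 1 \/ w ^+ 2 + w + 1 = 0.
Proof.
move=> h.
have e : (w - 1) * (w ^+ 2 + w + 1) = 0.
  have -> : (w - 1) * (w ^+ 2 + w + 1) = w ^+ 3 - 1 by ring.
  by rewrite h subrr.
case uw: (w - 1 \is a GRing.unit).
  by right; rewrite -(mulKr uw (w ^+ 2 + w + 1)) e mulr0.
left; move: uw; rewrite unitE => /negbFE nw.
have e3 : w ^+ 2 + w + 1 = 3%:R + (w - 1) * (w + 2%:R) by ring.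
have u3 : w ^+ 2 + w + 1 \is a GRing.unit by rewrite e3 unitD_nu ?unit3 // nuMl.
by apply/eqP; rewrite -subr_eq0; apply/eqP; rewrite -(mulrK u3 (w - 1)) e mul0r.
Qed.


Definition act (c : R * R) (u : {unit R}) : R * R :=
  (val u ^+ 4 * c.1, val u ^+ 6 * c.2).

Lemma act1 : act^~ 1%g =1 id.
Proof. by case=> a b; rewrite /act val_unit1 !expr1n !mul1r. Qed.

Lemma actM : forall c, act_morph act c.
Proof.
by case=> a b u v; rewrite /act /=; congr (_, _); ring.
Qed.

Definition uact := TotalAction act1 actM.

Lemma disc_act c u : disc (act c u) = (val u) ^+ 12 * disc c.
Proof. by rewrite /disc /act /=; ring. Qed.

Lemma ns_act c u : nonsingular (act c u) = nonsingular c.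
Proof. by rewrite /nonsingular disc_act unitrM unitrX ?(valP u). Qed.

Lemma orbitE (c c' : R * R) : (c' \in orbit uact setT c) = curve_iso c c'.
Proof.
apply/imsetP/existsP.
  case=> u _ ->; exists (val u)^-1; rewrite unitrV (valP u) invrK /=.
  by rewrite !eqxx.
case=> u0 /andP[hu /andP[/eqP e1 /eqP e2]].
have hv : u0^-1 \is a GRing.unit by rewrite unitrV.
exists (FinRing.Unit hv); first by rewrite inE.
by case: c' e1 e2 => a b /= -> ->.
Qed.

Lemma acts_NS : [acts setT, on nonsing_curves (p ^ m) | uact].
Proof. by apply/actsP => u _ c; rewrite !inE /= ns_act. Qed.

Lemma CR_eq : C_R (p ^ m) = #|orbit uact setT @: nonsing_curves (p ^ m)|.
Proof.
rewrite /C_R; congr #|_|.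
have H : {in nonsing_curves n, (fun c => [set c' in nonsing_curves n | curve_iso c c'])
   =1 orbit uact setT}.
  move=> c hc; apply/setP => c' /=.
  rewrite inE orbitE andb_idl // -orbitE => /imsetP[u _ ->].
  by move: hc; rewrite !inE /= ns_act.
rewrite (eq_in_imset H). reflexivity.
Qed.

Lemma burnside :
  (\sum_(a in [set: {unit R}]) #|('Fix_(nonsing_curves (p ^ m) | uact)[a])%g|)%N
   = (C_R (p ^ m) * #|[set: {unit R}]|)%N.
Proof. by rewrite CR_eq -(Frobenius_Cauchy (G := [set: {unit R}]%G)) //; apply: acts_NS. Qed.


Lemma cardR : #|R| = n.
Proof. by rewrite card_ord Zp_cast ?n_gt1. Qed.

Lemma unit_addnu (x y : R) : nu y -> (x + y \is a GRing.unit) = (x \is a GRing.unit).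
Proof.
move=> hy; apply/idP/idP => [h|]; last by move=> h; apply: unitD_nu.
by rewrite -(addrK y x); apply: unitD_nu => //; apply: nuNeg.
Qed.



Lemma nuE (x : R) : nu x = ~~ (x \is a GRing.unit).
Proof. by rewrite unitE negbK. Qed.

Lemma nuX (x : R) k : (0 < k)%N -> nu (x ^+ k) = nu x.
Proof. by move=> k0; rewrite !nuE unitrX_pos. Qed.

Lemma unit_natE k : ((k%:R : R) \is a GRing.unit) = ~~ (p %| k)%N.
Proof. by rewrite unitE nuN. Qed.

Definition M : {set R} := [set x | nu x].
Definition phi := #|[set x : R | x \is a GRing.unit]|.

Lemma phiE : phi = (n - #|M|)%N.
Proof.
rewrite /phi cardsCs cardR; congr (_ - _)%N; apply: eq_card => x.
by rewrite !inE nuE.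
Qed.

Definition psi (tx : R * R) : R * R :=
  if tx.1 \is a GRing.unit then (tx.1 ^+ 2 + tx.2, tx.1 * (tx.1 ^+ 2 + tx.2)) else tx.

Definition Sg : {set R * R} := [set c | nu (c.2 ^+ 2 - c.1 ^+ 3)].
Definition Dom : {set R * R} := [set c | nu c.2].

Lemma psi_inj : {in Dom &, injective psi}.
Proof.
move=> [t x] [t' x']; rewrite !inE /psi /= => hx hx'.
case ut: (t \is a GRing.unit); case ut': (t' \is a GRing.unit) => //.
- move/eqP; rewrite xpair_eqE => /andP[/eqP e1 /eqP e2].
  have us : t ^+ 2 + x \is a GRing.unit by rewrite unit_addnu // unitrX_pos.
  have et : t = t' by apply: (mulIr us); rewrite e2 e1.
  rewrite -et in e1; move/addrI: e1 => ->. by rewrite et.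
- move/eqP; rewrite xpair_eqE => /andP[/eqP e1 /eqP e2]; move: ut'; rewrite -e1 unit_addnu // unitrX_pos //.
  by rewrite ut.
- move/eqP; rewrite xpair_eqE => /andP[/eqP e1 /eqP e2]; move: ut; rewrite e1 unit_addnu // unitrX_pos //.
  by rewrite ut'.
Qed.

Lemma psi_img : psi @: Dom = Sg.
Proof.
apply/setP => [[s r]]; rewrite inE /=; apply/imsetP/idP.
  case=> [[t x]]; rewrite inE /psi /= => hx.
  case: ifP => ut [-> ->] /=.
    have -> : (t * (t ^+ 2 + x)) ^+ 2 - (t ^+ 2 + x) ^+ 3
      = - ((t ^+ 2 + x) ^+ 2 * x) by ring.
    by apply: nuNeg; apply: nuMr.
  apply: nuB; first by rewrite nuX.
  by rewrite nuX // nuE ut.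
move=> h.
case us: (s \is a GRing.unit); last first.
  exists (s, r); rewrite /psi /= ?us // inE /=.
  have : nu (r ^+ 2) by rewrite -(subrK (s ^+ 3) (r ^+ 2)) nuD // nuX // nuE us.
  by rewrite nuX.
set t := r * s^-1.
have er : r = t * s by rewrite /t mulrVK.
have hx : nu (s - t ^+ 2).
  have e : r ^+ 2 - s ^+ 3 = - (s ^+ 2 * (s - t ^+ 2)) by rewrite er; ring.
  move: h; rewrite e nuE unitrN unitrM unitrX_pos // us /= -nuE.
  done.
have ut : t \is a GRing.unit.
  have e : t ^+ 2 = s + - (s - t ^+ 2) by ring.
  have : t ^+ 2 \is a GRing.unit by rewrite e unit_addnu // nuNeg.
  by rewrite unitrX_pos.
exists (t, s - t ^+ 2); first by rewrite inE.
rewrite /psi /= ut.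
have -> : t ^+ 2 + (s - t ^+ 2) = s by ring.
by rewrite -er.
Qed.

Lemma card_Sg : #|Sg| = (n * #|M|)%N.
Proof.
rewrite -psi_img (card_in_imset psi_inj).
have -> : Dom = setX [set: R] M by apply/setP => c; rewrite !inE.
by rewrite cardsX cardsT cardR.
Qed.


Lemma unit1728 : (1728%:R : R) \is a GRing.unit.
Proof.
rewrite unit_natE (_ : 1728 = 2 ^ 6 * 3 ^ 3)%N // Euclid_dvdM // !Euclid_dvdX //.
by rewrite (negbTE p_nd2) (negbTE p_nd3).
Qed.

Definition fsub (c : R * R) : R * R := (- 3%:R * c.1, 2%:R * c.2).

Lemma fsub_inj : injective fsub.
Proof.
move=> [s r] [s' r']; rewrite /fsub /= => /eqP; rewrite xpair_eqE.
case/andP => /eqP e1 /eqP e2.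
have u3 : (- 3%:R : R) \is a GRing.unit by rewrite unitrN unit3.
by rewrite (mulrI u3 e1) (mulrI unit2 e2).
Qed.

Lemma card_NS : #|nonsing_curves (p ^ m)| = (n * phi)%N.
Proof.
rewrite -(card_preimset _ fsub_inj).
have -> : fsub @^-1: nonsing_curves (p ^ m) = ~: Sg.
  apply/setP => [[s r]]; rewrite !inE /nonsingular /disc /fsub /= nuE negbK.
  have -> : - 16%:R * (4%:R * (- 3%:R * s) ^+ 3 + 27%:R * (2%:R * r) ^+ 2)
     = - (1728%:R : R) * (r ^+ 2 - s ^+ 3) by ring.
  by rewrite unitrM unitrN unit1728.
have := cardsC Sg; rewrite card_prod cardR card_Sg phiE mulnBr => <-.
by rewrite addKn.
Qed.


Lemma unit16 : (16%:R : R) \is a GRing.unit.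
Proof. by rewrite unit_natE (_ : 16 = 2 ^ 4)%N // Euclid_dvdX // (negbTE p_nd2). Qed.
Lemma unit4 : (4%:R : R) \is a GRing.unit.
Proof. by rewrite unit_natE (_ : 4 = 2 ^ 2)%N // Euclid_dvdX // (negbTE p_nd2). Qed.
Lemma unit27 : (27%:R : R) \is a GRing.unit.
Proof. by rewrite unit_natE (_ : 27 = 3 ^ 3)%N // Euclid_dvdX // (negbTE p_nd3). Qed.

Lemma ns_D (c : R * R) :
  nonsingular c = (4%:R * c.1 ^+ 3 + 27%:R * c.2 ^+ 2 \is a GRing.unit).
Proof. by rewrite /nonsingular /disc unitrM unitrN unit16. Qed.

Lemma D_cases (a b : R) : 4%:R * a ^+ 3 + 27%:R * b ^+ 2 \is a GRing.unit ->
  (a \is a GRing.unit) || (b \is a GRing.unit).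
Proof.
move=> hD; apply/negPn/negP; rewrite negb_or => /andP[].
rewrite !unitE !negbK => ha hb; move: hD; rewrite unitE; apply/negP/negPn.
by apply: nuD; apply: nuMr; rewrite nuX.
Qed.

Lemma neg_eq (y : R) : (- y == y) = (y == 0).
Proof.
apply/eqP/eqP => [h|->]; last by rewrite oppr0.
apply: (mulrI unit2); rewrite mulr0 mulr_natl mulr2n.
by rewrite -{1}h addNr.
Qed.

Lemma fixE (u : {unit R}) c :
  (c \in ('Fix_(nonsing_curves (p ^ m) | uact)[u])%g)
   = nonsingular c && (act c u == c).
Proof. by rewrite in_setI inE; congr andb; apply/afix1P/eqP. Qed.

Definition fval (x : R) : nat :=
  if x ^+ 2 == 1 then #|nonsing_curves (p ^ m)|
  else if x ^+ 4 == 1 then phi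
  else if x ^+ 6 == 1 then phi else 0%N.

Lemma cardX1 (P : pred R) :
  #|[set c : R * R | P c.1 && (c.2 == 0)]| = #|[set a | P a]|.
Proof.
have -> : [set c : R * R | P c.1 && (c.2 == 0)] = setX [set a | P a] [set 0].
  by apply/setP => c; rewrite !inE.
by rewrite cardsX cards1 muln1.
Qed.

Lemma card1X (P : pred R) :
  #|[set c : R * R | (c.1 == 0) && P c.2]| = #|[set a | P a]|.
Proof.
have -> : [set c : R * R | (c.1 == 0) && P c.2] = setX [set 0] [set a | P a].
  by apply/setP => c; rewrite !inE.
by rewrite cardsX cards1 mul1n.
Qed.

Lemma act_eq (u : {unit R}) c :
  (act c u == c) = (val u ^+ 4 * c.1 == c.1) && (val u ^+ 6 * c.2 == c.2).
Proof. by case: c => a b; rewrite /act xpair_eqE. Qed.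

Lemma fix_card (u : {unit R}) :
  #|('Fix_(nonsing_curves (p ^ m) | uact)[u])%g| = fval (val u).
Proof.
rewrite /fval; set x := val u.
have e4 : x ^+ 4 = (x ^+ 2) ^+ 2 by rewrite -exprM.
have e6 : x ^+ 6 = (x ^+ 2) ^+ 3 by rewrite -exprM.
case: ifP => h2.
  apply: eq_card => c; rewrite fixE act_eq -/x e4 e6 (eqP h2) !expr1n !mul1r.
  by rewrite !eqxx !andbT /nonsing_curves inE.
case: ifP => h4.
  have hm : x ^+ 2 = -1 by case: (root4 (eqP h4)) => // h; rewrite h eqxx in h2.
  have h6 : x ^+ 6 = -1 by rewrite (_ : 6 = 4 + 2)%N // exprD (eqP h4) hm mul1r.
  rewrite /phi; transitivity #|[set c : R * R | (c.1 \is a GRing.unit) && (c.2 == 0)]|;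
    last exact: (cardX1 (fun a => a \is a GRing.unit)).
  apply: eq_card => c.
  rewrite fixE act_eq -/x (eqP h4) h6 mul1r mulN1r inE eqxx neg_eq andTb.
  case: eqP => [e|]; last by rewrite !andbF.
  by rewrite !andbT ns_D e expr0n mulr0 addr0 unitrM unit4 unitrX_pos.
case: ifP => h6; last first.
  apply/eqP; rewrite cards_eq0; apply/eqP/setP => c; rewrite fixE inE.
  apply/negP => /andP[]; rewrite ns_D act_eq -/x => /D_cases.
  case/orP => [ua | ub] /andP[/eqP ea /eqP eb].
    by move: h4; rewrite (mulIr ua (etrans ea (esym (mul1r c.1)))) eqxx.
  by move: h6; rewrite (mulIr ub (etrans eb (esym (mul1r c.2)))) eqxx.
set w := x ^+ 2 in e4 e6 h2 h4 h6.
have w3 : w ^+ 3 = 1 by rewrite -e6; apply/eqP.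
have ww : w ^+ 2 + w + 1 = 0 by case: (cube1 w3) => // h; rewrite h eqxx in h2.
have uw : (w ^+ 2 - 1) \is a GRing.unit.
  have e : (w ^+ 2 - 1) * (w - 1) = (w ^+ 3 - 1) + 3%:R - (w ^+ 2 + w + 1) by ring.
  have : (w ^+ 2 - 1) * (w - 1) \is a GRing.unit.
    by rewrite e w3 ww subrr add0r subr0 unit3.
  by rewrite unitrM => /andP[].
rewrite /phi; transitivity #|[set c : R * R | (c.1 == 0) && (c.2 \is a GRing.unit)]|;
  last exact: (card1X (fun a => a \is a GRing.unit)).
apply: eq_card => c.
rewrite fixE act_eq -/x e4 (eqP h6) mul1r inE eqxx andbT.
have -> : (w ^+ 2 * c.1 == c.1) = (c.1 == 0).
  apply/eqP/eqP => [h|->]; last by rewrite mulr0.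
  have h0 : (w ^+ 2 - 1) * c.1 = 0 by rewrite mulrBl h mul1r subrr.
  by rewrite -(mulKr uw c.1) h0 mulr0.
case: eqP => [e|]; last by rewrite !andbF.
by rewrite andbT ns_D e expr0n mulr0 add0r unitrM unit27 unitrX_pos.
Qed.

Lemma card_units (P : pred R) :
  #|[set a : {unit R} | P (val a)]| = #|[set x : R | (x \is a GRing.unit) && P x]|.
Proof.
rewrite -(card_imset _ val_inj); apply: eq_card => x; rewrite [in RHS]inE.
apply/imsetP/andP => [[a]|[ux px]].
  by rewrite inE => pa ->; split => //; apply: (valP a).
by exists (FinRing.Unit ux); rewrite ?inE.
Qed.

Lemma sum_if (P : pred R) K :
  (\sum_(a in [set: {unit R}]) (if P (val a) then K else 0))%N
  = (#|[set x : R | (x \is a GRing.unit) && P x]| * K)%N.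
Proof.
rewrite -big_mkcondr -card_units.
rewrite (eq_bigl (fun a => a \in [set a : {unit R} | P (val a)])) => [|a].
  by rewrite sum_nat_const.
by rewrite !inE.
Qed.

Definition T2 := #|[set x : R | (x \is a GRing.unit) && (x ^+ 2 == 1)]|.
Definition T4 := #|[set x : R | (x \is a GRing.unit) && ((x ^+ 2 != 1) && (x ^+ 4 == 1))]|.
Definition T6 := #|[set x : R | (x \is a GRing.unit) &&
   ((x ^+ 2 != 1) && (x ^+ 4 != 1) && (x ^+ 6 == 1))]|.

Lemma sum_fix :
  (\sum_(a in [set: {unit R}]) #|('Fix_(nonsing_curves (p ^ m) | uact)[a])%g|)%N
  = (T2 * #|nonsing_curves (p ^ m)| + T4 * phi + T6 * phi)%N.
Proof.
rewrite (eq_bigr (fun a => fval (val a))) => [|a _]; last exact: fix_card.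
rewrite /T2 /T4 /T6 -!sum_if -!big_split /=.
apply: eq_bigr => a _; rewrite /fval.
by case: (val a ^+ 2 == 1); case: (val a ^+ 4 == 1); case: (val a ^+ 6 == 1); rewrite /= ?addn0 ?add0n.
Qed.

Lemma one_neq_m1 : (1 : R) != -1.
Proof. by rewrite eq_sym neg_eq oner_eq0. Qed.

Lemma unit_neq_opp (t : R) : t \is a GRing.unit -> t != - t.
Proof. by move=> ut; rewrite eq_sym neg_eq; apply: contraTneq ut => ->; rewrite unitr0. Qed.

Lemma T2E : T2 = 2%N.
Proof.
rewrite /T2 (_ : [set x : R | _] = [set 1; -1]); last first.
  apply/setP => x; rewrite !inE; apply/andP/orP => [[ux /eqP h]|].
    have h' : x ^+ 2 = 1 ^+ 2 by rewrite h expr1n.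
    by case: (sq_eq h' (unitr1 _)) => ->; rewrite eqxx; [left|right].
  by case=> /eqP ->; rewrite ?unitrN unitr1 ?sqrrN expr1n.
by rewrite cards2 one_neq_m1.
Qed.

Lemma T4E : T4 = if [exists i : R, i ^+ 2 == -1] then 2%N else 0%N.
Proof.
case: existsP => [[i /eqP hi]|hn]; last first.
  apply/eqP; rewrite cards_eq0; apply/eqP/setP => x; rewrite !inE.
  apply/negP => /andP[ux /andP[h2 /eqP h4]].
  case: (root4 h4) => h; first by rewrite h eqxx in h2.
  by apply: hn; exists x; rewrite h.
have ui : i \is a GRing.unit by rewrite -(unitrX_pos i (isT : (0 < 2)%N)) hi unitrN unitr1.
rewrite /T4 (_ : [set x : R | _] = [set i; -i]); last first.
  apply/setP => x; rewrite !inE; apply/andP/orP => [[ux /andP[h2 /eqP h4]]|].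
    case: (root4 h4) => h; first by rewrite h eqxx in h2.
    have h' : x ^+ 2 = i ^+ 2 by rewrite h hi.
    by case: (sq_eq h' ui) => ->; rewrite eqxx; [left|right].
  have e4 : forall y : R, y ^+ 4 = (y ^+ 2) ^+ 2 by move=> y; rewrite -exprM.
  case=> /eqP ->; rewrite ?unitrN ui e4 ?sqrrN hi sqrrN expr1n eqxx andbT;
    by rewrite eq_sym one_neq_m1.
by rewrite cards2 unit_neq_opp.
Qed.

Lemma e4 (y : R) : y ^+ 4 = (y ^+ 2) ^+ 2. Proof. by rewrite -exprM. Qed.
Lemma e6 (y : R) : y ^+ 6 = (y ^+ 2) ^+ 3. Proof. by rewrite -exprM. Qed.

Lemma T6E : T6 = if [exists w : R, w ^+ 2 + w + 1 == 0] then 4%N else 0%N.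
Proof.
case: existsP => [[w /eqP ww]|hn]; last first.
  apply/eqP; rewrite cards_eq0; apply/eqP/setP => x; rewrite !inE.
  apply/negP => /andP[ux /andP[/andP[h2 h4] /eqP h6]].
  rewrite e6 in h6; case: (cube1 h6) => h; first by rewrite h eqxx in h2.
  by apply: hn; exists (x ^+ 2); rewrite h.
have w3 : w ^+ 3 = 1.
  have e : w ^+ 3 = (w - 1) * (w ^+ 2 + w + 1) + 1 by ring.
  by rewrite e ww mulr0 add0r.
have uw : w \is a GRing.unit by rewrite -(unitrX_pos w (isT : (0 < 3)%N)) w3 unitr1.
have uw2 : w ^+ 2 \is a GRing.unit by rewrite unitrX_pos.
have wn1 : w != 1.
  apply/eqP => e; move: unit3; rewrite (_ : 3%:R = w ^+ 2 + w + 1).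
    by rewrite ww unitr0.
  by rewrite e; ring.
have w2n1 : w ^+ 2 != 1.
  apply: contra wn1 => /eqP e.
  have e' : w ^+ 3 = w ^+ 2 * w by ring.
  apply/eqP; transitivity (w ^+ 2 * w); first by rewrite e mul1r.
  by rewrite -e' w3.
have w22 : (w ^+ 2) ^+ 2 = w.
  rewrite -e4; have e : w ^+ 4 = w ^+ 3 * w by ring.
  by rewrite e w3 mul1r.
have w23 : (w ^+ 2) ^+ 3 = 1.
  by rewrite -exprM mulnC exprM w3 expr1n.
have good : forall y : R, y ^+ 2 = w ^+ 2 \/ y ^+ 2 = w ->
   (y \is a GRing.unit) && ((y ^+ 2 != 1) && (y ^+ 4 != 1) && (y ^+ 6 == 1)).
  move=> y hy; rewrite -(unitrX_pos y (isT : (0 < 2)%N)) e4 e6.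
  by case: hy => ->; rewrite ?uw ?uw2 ?w22 ?w23 ?w3 ?wn1 ?w2n1 ?eqxx.
rewrite /T6 (_ : [set x : R | _] = [set x | x \in [:: w; -w; w ^+ 2; - w ^+ 2]]).
  rewrite cardsE; apply/card_uniqP.
  rewrite /= !inE !negb_or unit_neq_opp // unit_neq_opp // !andbT.
  have nww2 : w != w ^+ 2.
    apply: contra wn1 => /eqP e; apply/eqP; apply: (mulrI uw).
    by rewrite mulr1 -expr2 -e.
  have nwmw2 : w != - w ^+ 2.
    apply/eqP => e; have e' : w + w ^+ 2 = 0 by rewrite {1}e addNr.
    have h1 : (1 : R) = (w ^+ 2 + w + 1) - (w + w ^+ 2) by ring.
    by move: (oner_eq0 R); rewrite h1 ww e' subrr eqxx.
  rewrite nww2 nwmw2 /=; apply/andP; split.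
    by rewrite eqr_oppLR.
  by rewrite eqr_opp.
apply/setP => x; rewrite !inE; apply/idP/idP.
  case/andP => ux /andP[/andP[h2 h4] /eqP h6].
  set v := x ^+ 2 in h2 h4 h6; rewrite e4 -/v in h4; rewrite e6 -/v in h6.
  have vv : v ^+ 2 + v + 1 = 0 by case: (cube1 h6) => // h; rewrite h eqxx in h2.
  have e : (v - w) * (v + w + 1) = 0.
    have -> : (v - w) * (v + w + 1) = (v ^+ 2 + v + 1) - (w ^+ 2 + w + 1) by ring.
    by rewrite vv ww subrr.
  have u21 : (v - w) - (v + w + 1) \is a GRing.unit.
    rewrite -(unitrX_pos _ (isT : (0 < 2)%N)).
    have -> : ((v - w) - (v + w + 1)) ^+ 2 = 4%:R * (w ^+ 2 + w + 1) - 3%:R by ring.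
    by rewrite ww mulr0 sub0r unitrN unit3.
  case: (mul0_split e u21) => /eqP.
    rewrite subr_eq0 => /eqP hv.
    have hx : x ^+ 2 = (w ^+ 2) ^+ 2 by rewrite w22.
    by case: (sq_eq hx uw2) => ->; rewrite eqxx ?orbT.
  move=> /eqP hv.
  have hx : x ^+ 2 = w ^+ 2.
    have -> : w ^+ 2 = (w ^+ 2 + w + 1) - (v + w + 1) + v by ring.
    by rewrite ww hv subrr add0r.
  by case: (sq_eq hx uw) => ->; rewrite eqxx ?orbT.
case/or4P => /eqP ->; apply: good.
- by left.
- by left; rewrite sqrrN.
- by right.
- by right; rewrite sqrrN.
Qed.

Lemma cardG : #|[set: {unit R}]| = (p.-1 * p ^ m.-1)%N.
Proof.
have n0 : (0 < p ^ m)%N by rewrite expn_gt0 prime_gt0.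
have := card_units_Zp n0; rewrite /units_Zp => ->.
by rewrite totient_pfactor.
Qed.

Lemma unit_eq1 (u : {unit R}) k : ((u ^+ k)%g == 1%g) = (val u ^+ k == 1).
Proof. by rewrite -(inj_eq val_inj) val_unitX val_unit1. Qed.

Lemma unit_is1 (u : {unit R}) : (u == 1%g) = (val u == 1).
Proof. by rewrite -(inj_eq val_inj) val_unit1. Qed.

Lemma p_odd : ~~ (2 %| p)%N.
Proof.
apply/negP => h; have e : 2%N = p by apply/(prime_nt_dvdP pp).
by move: p_nd2; rewrite -e dvdnn.
Qed.

Lemma p_nd3' : ~~ (3 %| p)%N.
Proof.
apply/negP => h; have e : 3%N = p by apply/(prime_nt_dvdP pp).
by move: p_nd3; rewrite -e dvdnn.
Qed.

Lemma dvdG (d : nat) : coprime d p -> (d %| #|[set: {unit R}]|)%N = (d %| p.-1)%N.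
Proof. by move=> c; rewrite cardG Gauss_dvdl // coprimeXr. Qed.

Lemma ex_w : [exists w : R, w ^+ 2 + w + 1 == 0] = (3 %| p.-1)%N.
Proof.
apply/existsP/idP.
  case=> w /eqP ww.
  have w3 : w ^+ 3 = 1.
    have e : w ^+ 3 = (w - 1) * (w ^+ 2 + w + 1) + 1 by ring.
    by rewrite e ww mulr0 add0r.
  have uw : w \is a GRing.unit by rewrite -(unitrX_pos w (isT : (0 < 3)%N)) w3 unitr1.
  have wn1 : w != 1.
    apply/eqP => e; move: unit3; rewrite (_ : 3%:R = w ^+ 2 + w + 1).
      by rewrite ww unitr0.
    by rewrite e; ring.
  set u := FinRing.Unit uw.
  have o3 : #[u]%g = 3%N.
    apply/(prime_nt_dvdP (isT : prime 3)).
      by rewrite order_eq1 unit_is1.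
    by rewrite order_dvdn unit_eq1 w3.
  by rewrite -dvdG ?prime_coprime // ?p_nd3' // -o3 order_dvdG ?inE.
move=> h3; have : (3 %| #|[set: {unit R}]|)%N by rewrite dvdG // prime_coprime // p_nd3'.
case/(Cauchy (G := [set: {unit R}]%G) (isT : prime 3)) => a _ oa.
exists (val a).
have a3 : val a ^+ 3 = 1 by apply/eqP; rewrite -unit_eq1 -oa expg_order.
have an1 : val a != 1 by rewrite -unit_is1 -order_eq1 oa.
by case: (cube1 a3) => [h|->]; [rewrite h eqxx in an1|].
Qed.

Lemma ex_i : [exists i : R, i ^+ 2 == -1] = (4 %| p.-1)%N.
Proof.
have c4 : coprime 4 p by rewrite (_ : 4 = 2 ^ 2)%N // coprimeXl // prime_coprime // p_odd.
apply/existsP/idP.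
  case=> i /eqP hi.
  have ui : i \is a GRing.unit.
    by rewrite -(unitrX_pos i (isT : (0 < 2)%N)) hi unitrN unitr1.
  set u := FinRing.Unit ui.
  have d4 : (#[u]%g %| 4)%N by rewrite order_dvdn unit_eq1 /= e4 hi sqrrN expr1n.
  have nd2 : ~~ (#[u]%g %| 2)%N.
    by rewrite order_dvdn unit_eq1 /= hi eq_sym one_neq_m1.
  have o4 : #[u]%g = 4%N.
    move: d4 nd2; rewrite (dvdn_divisors _ (isT : (0 < 4)%N)).
    have -> : divisors 4 = [:: 1; 2; 4]%N by [].
    by rewrite !inE => /or3P [] /eqP ->.
  by rewrite -dvdG // -o4 order_dvdG ?inE.
move=> h4.
have g4 : (4 %| #|[set: {unit R}]|)%N by rewrite dvdG.
have [P sylP] := Sylow_exists 2 [set: {unit R}]%G.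
have cP : #|P| = (2 ^ logn 2 #|[set: {unit R}]|)%N by rewrite (card_Hall sylP) p_part.
have lg : (2 <= logn 2 #|[set: {unit R}]|)%N.
  by rewrite -pfactor_dvdn // cardG muln_gt0 expn_gt0 prime_gt0 // -subn1 subn_gt0 prime_gt1.
have [a aP ha] : exists2 a, a \in P & val a ^+ 2 != 1.
  apply/exists_inP; apply: contraT; rewrite negb_exists_in => /forall_inP H.
  have sub : val @: P \subset [set 1; -1].
    apply/subsetP => x /imsetP[a aP ->]; rewrite !inE.
    have h : val a ^+ 2 = 1 ^+ 2 by rewrite expr1n; apply/eqP; move: (H a aP); rewrite negbK.
    by case: (sq_eq h (unitr1 _)) => ->; rewrite eqxx ?orbT.
  have := subset_leq_card sub; rewrite card_imset; last exact: val_inj.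
  rewrite cards2 one_neq_m1 cP => le2.
  have : (2 ^ 2 <= 2 ^ logn 2 #|[set: {unit R}]|)%N by rewrite leq_exp2l.
  by move=> h; have := leq_trans h le2.
have [j lej oj] : exists2 j, (j <= logn 2 #|[set: {unit R}]|)%N & #[a]%g = (2 ^ j)%N.
  by apply/dvdn_pfactor => //; rewrite -cP; apply: order_dvdG.
have j2 : (2 <= j)%N.
  rewrite leqNgt; apply/negP => jl; move: ha; rewrite -unit_eq1 -order_dvdn oj.
  by case: j jl {lej oj} => [|[|]].
exists (val ((a ^+ (2 ^ (j - 2)))%g)).
have ob : #[(a ^+ (2 ^ (j - 2)))%g]%g = 4%N.
  have ej : (2 ^ j = 2 ^ (j - 2) * 4)%N by rewrite -(expnD 2 (j - 2) 2) subnK.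
  rewrite orderXdiv oj ej ?mulKn ?expn_gt0 //; apply: dvdn_mulr; apply: dvdnn.
have b4 : val ((a ^+ (2 ^ (j - 2)))%g) ^+ 4 = 1 by apply/eqP; rewrite -unit_eq1 -ob expg_order.
have b2 : val ((a ^+ (2 ^ (j - 2)))%g) ^+ 2 != 1 by rewrite -unit_eq1 -order_dvdn ob.
by case: (root4 b4) => [h|->]; [rewrite h eqxx in b2|].
Qed.

Lemma Gphi : #|[set: {unit R}]| = phi.
Proof.
rewrite /phi; have h := card_units (fun _ : R => true).
transitivity #|[set x : R | (x \is a GRing.unit) && true]|;
  last by apply: eq_card => x; rewrite !inE andbT.
by rewrite -h; apply: eq_card => a; rewrite !inE.
Qed.

Lemma phi_gt0 : (0 < phi)%N.
Proof. by apply/card_gt0P; exists 1; rewrite inE unitr1. Qed.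

Lemma main :
  C_R (p ^ m) =
    (if p %% 12 == 1 then 2 * p ^ m + 6
     else if p %% 12 == 5 then 2 * p ^ m + 2
     else if p %% 12 == 7 then 2 * p ^ m + 4
     else 2 * p ^ m)%N.
Proof.
have B := burnside.
rewrite sum_fix T2E T4E T6E ex_i ex_w card_NS Gphi in B.
have : (C_R (p ^ m) * phi = (2 * n + (if (4 %| p.-1)%N then 2 else 0)
   + (if (3 %| p.-1)%N then 4 else 0)) * phi)%N.
  rewrite -B; set X := (if (4 %| p.-1)%N then _ else _); set Y := (if (3 %| p.-1)%N then _ else _); nia.
move/eqP; rewrite eqn_pmul2r ?phi_gt0 // => /eqP ->.
have h2 := p_odd; have h3 := p_nd3'; have h1 := prime_gt1 pp.
by do ! case: ifP => ?; lia.
Qed.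

End S.

Theorem theorem9 (p m : nat) :
  prime p -> coprime p 6 -> (1 <= m)%N ->
  C_R (p ^ m) =
    (if p %% 12 == 1 then 2 * p ^ m + 6
     else if p %% 12 == 5 then 2 * p ^ m + 2
     else if p %% 12 == 7 then 2 * p ^ m + 4
     else 2 * p ^ m)%N.
Proof. by move=> pp p6 m1; apply: main. Qed.
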